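(* Let $s_2=s_2(z)$ be the formal power series \[ s_2=\frac{1+z-z^{2}-\sqrt{1-2z-z^{2}-2z^{3}+z^{4}}}{2z}, \] where the square root is the power series with constant term $1$ (so $s_2=1+z^2+z^3+2z^4+\cdots$). For $k\ge 0$ let $f_k(z)$ and $g_k(z)$ be the generating functions (in the variable $z$ marking the number of steps) of partial Dyck paths with air pockets ending at level $k$ whose last step is an up-step or that are empty (for $f_k$), respectively whose last step is a down-step (for $g_k$). Then for all $k\ge 0$, \[ f_k=z^{k}s_2^{k},\qquad g_k=z^k\bigl(s_2^{k+1}-s_2^{k}\bigr). \] In particular, $f_k+g_k=z^ks_2^{k+1}$ is the generating function of partial Dyck paths with air pockets ending at level $k$.
   Context: A partial Dyck path with air pockets is a lattice path starting at $(0,0)$, using up-steps $(1,1)$ and down-steps $(1,-j)$ for any integer $j\ge1$, never going below the $x$-axis, such that no two down-steps are consecutive; it may end at any level $k\ge0$ (the height of its endpoint). Equivalently, $f_k,g_k$ are the unique formal power series in $z$ satisfying $f_0=1$, $f_k=zf_{k-1}+zg_{k-1}$ for $k\ge1$, and $g_k=z\sum_{j>k}f_j$ for $k\ge0$. *)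

(* Defs.v *)
From mathcomp Require Import all_boot all_order all_algebra.
Set Implicit Arguments. Unset Strict Implicit. Unset Printing Implicit Defensive.
Import Order.TTheory GRing.Theory Num.Theory.
Local Open Scope ring_scope.

Definition ps := nat -> rat.

Definition ps_of_poly (p : {poly rat}) : ps := fun n => p`_n.
Definition ps_one : ps := fun n => (n == 0%N)%:R.
Definition ps_add (a b : ps) : ps := fun n => a n + b n.
Definition ps_sub (a b : ps) : ps := fun n => a n - b n.
Definition ps_scale (c : rat) (a : ps) : ps := fun n => c * a n.
Definition ps_mul (a b : ps) : ps := fun n => \sum_(i < n.+1) a i * b (n - i)%N.
Definition ps_exp (a : ps) (k : nat) : ps := iter k (ps_mul a) ps_one.
Definition ps_zpow (k : nat) : ps := fun n => (n == k)%:R.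
(* division by z of a series with zero constant term: a / z *)
Definition ps_divz (a : ps) : ps := fun n => a n.+1.

Definition Delta : {poly rat} := 1 - 2%:R *: 'X - 'X^2 - 2%:R *: 'X^3 + 'X^4.
Definition numer_poly : {poly rat} := 1 + 'X - 'X^2.

(** s_2 = (1 + z - z^2 - r) / (2z), where r is the formal square root of Delta
    with constant term 1 *)
Definition s2_of (r : ps) : ps :=
  ps_scale (1 / 2%:R) (ps_divz (ps_sub (ps_of_poly numer_poly) r)).

(** * Partial Dyck paths with air pockets
    A path is a sequence of steps s : seq int; an up-step (1,1) is the step 1,
    a down-step (1,-j), j >= 1, is the step -j. *)
Definition is_up (x : int) : bool := x == 1.
Definition is_down (x : int) : bool := x <= -1.

Definition height (s : seq int) (i : nat) : int := \sum_(0 <= j < i) s`_j.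

Definition air_path (s : seq int) : bool :=
  [&& all (fun x => is_up x || is_down x) s,
      all (fun i => 0 <= height s i) (iota 0 (size s).+1) &
      all (fun i => ~~ (is_down s`_i && is_down s`_i.+1)) (iota 0 (size s).-1)].

Definition end_level (s : seq int) : int := height s (size s).

(* Every down-step of a path of length n has size at most n - 1, so the
   n-tuples over 'I_n.+1 encode (injectively) all candidate paths of length n. *)
Definition dec_step (i : nat) : int := if i == 0%N then 1 else - (i%:Z).
Definition dec_path n (t : n.-tuple 'I_n.+1) : seq int := [seq dec_step (nat_of_ord i) | i <- tval t].

Definition count_paths (P : seq int -> bool) (n : nat) : nat :=
  #|[set t : n.-tuple 'I_n.+1 | air_path (dec_path t) && P (dec_path t)]|.

Definition f_gf (k : nat) : ps := fun n =>
  (count_paths (fun s => (end_level s == k%:Z) &&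
                         ((s == [::]) || is_up (last 0 s))) n)%:R.
Definition g_gf (k : nat) : ps := fun n =>
  (count_paths (fun s => (end_level s == k%:Z) &&
                         (s != [::]) && is_down (last 0 s)) n)%:R.
Definition all_gf (k : nat) : ps := fun n =>
  (count_paths (fun s => end_level s == k%:Z) n)%:R.

(* Main.v *)
Require Import Defs.
From mathcomp Require Import all_boot all_order all_algebra.
From mathcomp Require Import ring zify.
Set Implicit Arguments. Unset Strict Implicit. Unset Printing Implicit Defensive.
Import Order.TTheory GRing.Theory Num.Theory.
Local Open Scope ring_scope.

Lemma height_rcons s x i : (i <= size s)%N -> height (rcons s x) i = height s i.
Proof.
move=> hi; rewrite /height; apply: eq_big_nat => j /andP[_ hj].
by rewrite nth_rcons (leq_trans hj hi).
Qed.

Lemma end_rcons s x : end_level (rcons s x) = end_level s + x.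
Proof.
rewrite /end_level size_rcons /height big_nat_recr //= nth_rcons ltnn eqxx.
congr (_ + _); apply: eq_big_nat => j /andP[_ hj]; by rewrite nth_rcons hj.
Qed.

Lemma iotaSr n : iota 0 n.+1 = rcons (iota 0 n) n.
Proof. by rewrite -addn1 iotaD cats1. Qed.

Lemma pairs_rcons s x :
  all (fun i => ~~ (is_down (rcons s x)`_i && is_down (rcons s x)`_i.+1)) (iota 0 (size s)) =
  all (fun i => ~~ (is_down s`_i && is_down s`_i.+1)) (iota 0 (size s).-1)
  && ~~ (is_down (last 0 s) && is_down x).
Proof.
case: s => [|y s]; first by rewrite /= /is_down.
have hs : size (y :: s) = (size s).+1 by [].
rewrite hs iotaSr all_rcons [(size s).+1.-1]/= andbC; congr andb.
  apply: eq_in_all => i; rewrite mem_iota add0n => /andP[_ hi].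
  by rewrite !nth_rcons hs !ltnS (ltnW hi) hi.
rewrite !nth_rcons hs ltnS leqnn ltnn eqxx.
by rewrite (nth_last 0 (y :: s)).
Qed.

Lemma air_rcons s x : air_path (rcons s x) =
  [&& air_path s, is_up x || is_down x, 0 <= end_level s + x &
      ~~ (is_down (last 0 s) && is_down x)].
Proof.
rewrite /air_path all_rcons size_rcons iotaSr all_rcons [(size s).+1.-1]/= pairs_rcons.
have -> : all (fun i => 0 <= height (rcons s x) i) (iota 0 (size s).+1) =
          all (fun i => 0 <= height s i) (iota 0 (size s).+1).
  apply: eq_in_all => i; rewrite mem_iota add0n ltnS => hi.
  by rewrite height_rcons.
have -> : height (rcons s x) (size s).+1 = end_level s + x.
  by rewrite -end_rcons /end_level size_rcons.
case: (is_up x || is_down x); case: (all _ s); case: (all _ (iota 0 (size s).+1)); 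
  case: (all _ (iota 0 (size s).-1));
  case: (0 <= _ + x); case: (is_down (last 0 s) && is_down x); done.
Qed.

Definition Al (m : nat) : seq int := [seq dec_step i | i <- iota 0 m.+1].
Fixpoint W (m n : nat) : seq (seq int) :=
  if n is n'.+1 then [seq rcons s x | s <- W m n', x <- Al m] else [:: [::]].

Lemma sumn_count (T : Type) (b : pred T) L :
  sumn [seq (b s : nat) | s <- L] = count b L.
Proof. by elim: L => //= a L ->. Qed.

Lemma count_split (T : eqType) (P Q1 Q2 : pred T) L :
  (forall s, s \in L -> (P s : nat) = (Q1 s + Q2 s)%N) ->
  count P L = (count Q1 L + count Q2 L)%N.
Proof.
elim: L => //= a L IH h.
rewrite IH => [|s hs]; last by apply: h; rewrite inE hs orbT.
by rewrite h ?inE ?eqxx // addnACA.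
Qed.

Lemma count_W m n P :
  count P (W m n.+1) = sumn [seq count (fun x => P (rcons s x)) (Al m) | s <- W m n].
Proof.
rewrite /= count_flatten -map_comp; congr sumn; apply: eq_map => s /=.
by rewrite count_map.
Qed.

Lemma dec_step_le1 i : dec_step i <= 1.
Proof. rewrite /dec_step; case: eqP => // _; lia. Qed.

Lemma mem_W m n s : (s \in W m n) = (size s == n) && all (mem (Al m)) s.
Proof.
elim: n s => [|n IH] s.
  by case: s => [|a s]; rewrite /= ?inE.
apply/idP/idP.
  case/allpairsP => [[s' x] /= [hs hx ->]].
  move: hs; rewrite IH => /andP[/eqP hs ha].
  by rewrite size_rcons hs eqxx all_rcons ha andbT.
case/lastP: s => [|s x]; first by [].
rewrite size_rcons eqSS all_rcons => /andP[hs /andP[hx ha]].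
apply/allpairsP; exists (s, x) => /=; split => //.
by rewrite IH hs ha.
Qed.

Lemma W_end m n s : s \in W m n -> end_level s <= n%:Z.
Proof.
elim: n s => [|n IH] s.
  rewrite inE => /eqP ->; by rewrite /end_level /height big_geq.
case/allpairsP => [[s' x] /= [hs hx ->]].
rewrite end_rcons; have := IH _ hs; have := dec_step_le1.
move: hx; rewrite /Al => /mapP [i _ ->] h1 h2.
have := h1 i; lia.
Qed.

Lemma W_uniq m n : uniq (W m n).
Proof.
elim: n => [|n IH]; first by [].
apply: allpairs_uniq => //.
  rewrite map_inj_in_uniq ?iota_uniq // => i j _ _.
  rewrite /dec_step; case: eqP => [->|hi]; case: eqP => [->|hj] //; lia.
move=> [s x] [s' x'] _ _ /= h.
by have [-> ->] := rcons_inj h.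
Qed.

Definition Pf (k : nat) (s : seq int) := (end_level s == k%:Z) && ((s == [::]) || is_up (last 0 s)).
Definition Pg (k : nat) (s : seq int) := (end_level s == k%:Z) && (s != [::]) && is_down (last 0 s).

Lemma air_end s : air_path s -> 0 <= end_level s.
Proof.
case/and3P => _ /allP h _; apply: h; by rewrite mem_iota add0n ltnS leqnn.
Qed.

Lemma air_last s : air_path s -> ~~ is_down (last 0 s) = (s == [::]) || is_up (last 0 s).
Proof.
case/and3P => /allP h _ _; case: s h => [|y s] h; first by [].
have := h _ (mem_last y s); rewrite /= /is_up /is_down.
case/orP => [/eqP -> //|H]; rewrite H; apply/esym/negbTE; move: H; lia.
Qed.

Lemma rcons_nnil (s : seq int) x : (rcons s x == [::]) = false.
Proof. by case: s. Qed.

Lemma dec_stepS i : dec_step i.+1 = - (i.+1)%:Z.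
Proof. by []. Qed.

Lemma cntF m s k : count (fun x => air_path (rcons s x) && Pf k (rcons s x)) (Al m)
  = (air_path s && (end_level s + 1 == k%:Z)).
Proof.
rewrite /Al /= count_map.
have -> : count (fun x => air_path (rcons s (dec_step x)) && Pf k (rcons s (dec_step x))) (iota 1 m) = 0%N.
  rewrite (eq_in_count (a2 := pred0)) ?count_pred0 // => i.
  rewrite mem_iota => /andP[hi _]; case: i hi => // i _.
  by rewrite /Pf last_rcons rcons_nnil dec_stepS /is_up /= !andbF.
rewrite addn0 /dec_step /= air_rcons /Pf last_rcons rcons_nnil end_rcons.
case ha: (air_path s) => //=.
have := air_end ha.
rewrite /is_up /is_down /= andbF andbT => H.
have -> : 0 <= end_level s + 1 by lia.
by rewrite eqxx andbT.
Qed.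

Lemma count_iota_eq (E k m : nat) : (E <= m)%N ->
  count (fun i : nat => E%:Z - i%:Z == k%:Z) (iota 1 m) = (k < E)%N.
Proof.
move=> hEm; case: (ltnP k E) => hk.
  rewrite (eq_in_count (a2 := pred1 (E - k)%N)); last first.
    move=> i _ /=; apply/eqP/eqP => ?; lia.
  rewrite count_uniq_mem ?iota_uniq // mem_iota; congr nat_of_bool; apply/andP; split; lia.
rewrite (eq_in_count (a2 := fun _ : nat => false)) ?count_pred0 // => i.
rewrite mem_iota => /andP[hi _] /=; apply/negbTE/eqP => ?; lia.
Qed.

Lemma cntG m s k : end_level s <= m%:Z ->
  count (fun x => air_path (rcons s x) && Pg k (rcons s x)) (Al m)
  = [&& air_path s, ~~ is_down (last 0 s) & k%:Z < end_level s].
Proof.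
move=> hE.
rewrite /Al /= count_map.
rewrite {1}/Pg last_rcons (_ : is_down (dec_step 0) = false) // !andbF add0n.
case hb: (air_path s && ~~ is_down (last 0 s)); last first.
  rewrite (eq_in_count (a2 := fun _ : nat => false)) ?count_pred0 //; first by move: hb; case: (air_path s) => //= ->.
  move=> i; rewrite mem_iota => /andP[hi _]; case: i hi => // i _.
  rewrite /= air_rcons /Pg dec_stepS /is_down /= -/(is_down _).
  move: hb; case: (air_path s) => //= /negbFE hb.
  rewrite hb (_ : - (i.+1)%:Z <= -1) /=; first by rewrite andbF.
  lia.
move/andP: hb => [ha hd]; rewrite ha hd /=.
have h0 := air_end ha.
rewrite (eq_in_count (a2 := fun i : nat => end_level s - i%:Z == k%:Z)); last first.
  move=> i; rewrite mem_iota => /andP[hi _]; case: i hi => // i _.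
  rewrite /= air_rcons /Pg dec_stepS end_rcons last_rcons rcons_nnil ha /is_down /= -/(is_down _) (negbTE hd) /=.
  have -> : (- (i.+1)%:Z <= -1) = true by lia.
  rewrite !andbT; case: eqP => [->|_]; last by rewrite andbF.
  by rewrite andbT.
case eE: (end_level s) h0 hE => [E|E] //= _ hE.
rewrite count_iota_eq; last by lia.
by [].
Qed.

Definition Fc m k n := count (fun s => air_path s && Pf k s) (W m n).
Definition Gc m k n := count (fun s => air_path s && Pg k s) (W m n).

Lemma air_nil : air_path [::].
Proof. by rewrite /air_path /= /height big_geq. Qed.

Lemma Fc0 m k : Fc m k 0 = (k == 0)%N.
Proof.
rewrite /Fc /= air_nil /Pf /end_level /height big_geq //= addn0.
by case: k.
Qed.

Lemma Gc0 m k : Gc m k 0 = 0%N.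
Proof. by rewrite /Gc /= /Pg /= !andbF. Qed.

Lemma FcS m k n : Fc m k n.+1 = count (fun s => air_path s && (end_level s + 1 == k%:Z)) (W m n).
Proof.
rewrite /Fc count_W -sumn_count; congr sumn; apply: eq_map => s.
by rewrite cntF.
Qed.

Lemma GcS m k n : (n <= m)%N ->
  Gc m k n.+1 = count (fun s => [&& air_path s, ~~ is_down (last 0 s) & k%:Z < end_level s]) (W m n).
Proof.
move=> hnm; rewrite /Gc count_W -sumn_count; congr sumn; apply/eq_in_map => s hs.
rewrite cntG //; have := W_end hs; lia.
Qed.

Lemma Fc0S m n : Fc m 0 n.+1 = 0%N.
Proof.
rewrite FcS (eq_in_count (a2 := fun _ => false)) ?count_pred0 // => s _.
case ha: (air_path s) => //=; have := air_end ha.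
move=> h; apply/negbTE/eqP; lia.
Qed.

Lemma FcSS m k n : Fc m k.+1 n.+1 = (Fc m k n + Gc m k n)%N.
Proof.
rewrite FcS /Fc /Gc; apply: count_split => s _.
case ha: (air_path s) => //=.
have hl := air_last ha.
rewrite /Pf /Pg -hl.
have -> : (end_level s + 1 == (k.+1)%:Z) = (end_level s == k%:Z).
  by apply/eqP/eqP => ?; lia.
case: s hl ha => [|y s] hl ha.
  by case: (end_level [::] == k%:Z).
rewrite /=; case: (end_level _ == _); case: (is_down _) => //.
Qed.

Lemma GcSS m k n : (n.+1 <= m)%N ->
  Gc m k n.+1 = (Fc m k.+1 n + Gc m k.+1 n.+1)%N.
Proof.
move=> hnm; rewrite !GcS ?(ltnW hnm) // /Fc; apply: count_split => s _.
case ha: (air_path s) => //=.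
rewrite /Pf -(air_last ha).
case: (is_down _) => /=; first by rewrite andbF.
rewrite andbT.
have h1 : (k%:Z < end_level s) = (end_level s == (k.+1)%:Z) || ((k.+1)%:Z < end_level s).
  by apply/idP/orP => [?|[/eqP ?|?]]; lia.
rewrite h1; case: eqP => [->|_] /=; last by [].
have -> : ((k.+1)%:Z < (k.+1)%:Z) = false by lia.
by [].
Qed.

Lemma Gcbig m k n : (n <= k)%N -> (n <= m)%N -> Gc m k n.+1 = 0%N.
Proof.
move=> hk hnm; rewrite GcS // (eq_in_count (a2 := fun _ => false)) ?count_pred0 // => s hs.
have := W_end hs => he; apply/negbTE; apply/negP => /and3P[_ _ h]; lia.
Qed.

Lemma dec_step_inj : injective dec_step.
Proof. move=> i j; rewrite /dec_step; case: eqP => [->|hi]; case: eqP => [->|hj] //; lia. Qed.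

Lemma dec_path_inj n : injective (@dec_path n).
Proof.
move=> t1 t2 h; apply: val_inj; apply: (inj_map _ h).
by move=> i j /dec_step_inj /val_inj.
Qed.

Lemma count_paths_W P n : count_paths P n = count (fun s => air_path s && P s) (W n n).
Proof.
rewrite /count_paths cardE -(size_map (@dec_path n)) -size_filter.
apply: perm_size; apply: uniq_perm.
- by rewrite (map_inj_uniq (@dec_path_inj n)) enum_uniq.
- by rewrite filter_uniq // W_uniq.
move=> s; rewrite mem_filter mem_W; apply/mapP/idP.
  case=> t; rewrite mem_enum inE => ht ->; rewrite ht /= size_map size_tuple eqxx /=.
  apply/allP => x /mapP [i _ ->]; rewrite /Al; apply: map_f.
  by rewrite mem_iota add0n ltn_ord.
case/andP => hq /andP[/eqP hs ha].
have [l hl] : exists l : seq 'I_n.+1, [seq dec_step (nat_of_ord i) | i <- l] = s.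
  elim: s {hs hq} ha => [|x s IH]; first by exists [::].
  rewrite /= => /andP[hx hs']; case: (IH hs') => l hl.
  move: hx; rewrite /Al => /mapP[j hj ->]; rewrite mem_iota add0n in hj.
  by exists (Ordinal hj :: l); rewrite /= hl.
have hsz : size l == n by rewrite -{2}hs -hl size_map.
exists (Tuple hsz); last by rewrite /dec_path /= hl.
by rewrite mem_enum inE /dec_path /= hl.
Qed.
Definition tr (N : nat) (a : ps) : {poly rat} := \poly_(i < N) a i.
Definition eqN (N : nat) (p q : {poly rat}) := forall i, (i < N)%N -> p`_i = q`_i.

Lemma trE N a i : (i < N)%N -> (tr N a)`_i = a i.
Proof. by move=> h; rewrite /tr coef_poly h. Qed.

Lemma eqN_refl N p : eqN N p p. Proof. by []. Qed.
Lemma eqN_sym N p q : eqN N p q -> eqN N q p.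
Proof. by move=> h i hi; rewrite h. Qed.
Lemma eqN_trans N p q r : eqN N p q -> eqN N q r -> eqN N p r.
Proof. by move=> h1 h2 i hi; rewrite h1 ?h2. Qed.
Lemma eqN_le M N p q : (M <= N)%N -> eqN N p q -> eqN M p q.
Proof. by move=> hMN h i hi; rewrite h // (leq_trans hi hMN). Qed.
Lemma eqN_eq N p q : p = q -> eqN N p q.
Proof. by move=> ->. Qed.

Lemma eqN_add N p p' q q' : eqN N p p' -> eqN N q q' -> eqN N (p + q) (p' + q').
Proof. by move=> h1 h2 i hi; rewrite !coefD h1 ?h2. Qed.
Lemma eqN_sub N p p' q q' : eqN N p p' -> eqN N q q' -> eqN N (p - q) (p' - q').
Proof. by move=> h1 h2 i hi; rewrite !coefB h1 ?h2. Qed.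
Lemma eqN_mul N p p' q q' : eqN N p p' -> eqN N q q' -> eqN N (p * q) (p' * q').
Proof.
move=> h1 h2 i hi; rewrite !coefM; apply: eq_bigr => j _.
have hj := ltn_ord j.
rewrite h1 ?h2 //; [lia | lia].
Qed.
Lemma eqN_exp N p q k : eqN N p q -> eqN N (p ^+ k) (q ^+ k).
Proof.
move=> h; elim: k => [|k IH]; first by rewrite !expr0.
by rewrite !exprS; apply: eqN_mul.
Qed.

Lemma tr_mul N a b : eqN N (tr N (ps_mul a b)) (tr N a * tr N b).
Proof.
move=> i hi; rewrite trE // coefM /ps_mul; apply: eq_bigr => j _.
have hj := ltn_ord j.
rewrite !trE //; lia.
Qed.

Lemma tr_exp N a k : eqN N (tr N (ps_exp a k)) (tr N a ^+ k).
Proof.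
elim: k => [|k IH].
  move=> i hi; rewrite trE // expr0 coef1 /ps_exp /= /ps_one; done.
have -> : ps_exp a k.+1 = ps_mul a (ps_exp a k) by [].
eapply eqN_trans; first exact: tr_mul.
by rewrite exprS; apply: eqN_mul.
Qed.

Lemma tr_sub N a b : eqN N (tr N (ps_sub a b)) (tr N a - tr N b).
Proof. by move=> i hi; rewrite coefB !trE. Qed.

Lemma tr_zpow N k : eqN N (tr N (ps_zpow k)) 'X^k.
Proof. by move=> i hi; rewrite trE // coefXn. Qed.

Lemma tr_poly N p : eqN N (tr N (ps_of_poly p)) p.
Proof. by move=> i hi; rewrite trE. Qed.

Definition Qd (S : {poly rat}) := 1 - numer_poly * S + 'X * S ^+ 2.

Lemma numer0 : numer_poly`_0 = 1.
Proof. by rewrite /numer_poly coefB coefD coef1 coefX coefXn /= subr0 addr0. Qed.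

Lemma ident (S : {poly rat}) :
  (numer_poly - ('X * S) *+ 2) * (numer_poly - ('X * S) *+ 2) - Delta = 'X * (Qd S *+ 4).
Proof.
rewrite /Delta /Qd /numer_poly !scaler_nat.
ring.
Qed.

Lemma h2 L r : r 0%N = 1 ->
  eqN L (tr L r) (numer_poly - ('X * tr L (s2_of r)) *+ 2).
Proof.
move=> hr0 [|i] hi.
  by rewrite trE // coefB coefMn coefXM /= numer0 mul0rn subr0 hr0.
rewrite trE // coefB coefMn coefXM /= trE; last by lia.
rewrite /s2_of /ps_scale /ps_divz /ps_sub /ps_of_poly.
by rewrite -mulr_natr; field.
Qed.

Lemma Qd_eq L r : r 0%N = 1 -> ps_mul r r = ps_of_poly Delta ->
  eqN L.-1 (Qd (tr L (s2_of r))) 0.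
Proof.
move=> hr0 hr2.
set S := tr L (s2_of r); set C := numer_poly - ('X * S) *+ 2.
have hRR : eqN L (tr L r * tr L r) Delta.
  eapply eqN_trans; first by apply: eqN_sym; apply: tr_mul.
  by rewrite hr2; apply: tr_poly.
have hC : eqN L (C * C) Delta.
  eapply eqN_trans; last exact: hRR.
  by apply: eqN_mul; apply: eqN_sym; apply: h2.
move=> i hi.
have : ('X * (Qd S *+ 4))`_i.+1 = 0.
  by rewrite -ident coefB hC ?subrr //; lia.
rewrite coefXM /= coefMn coef0 -mulr_natr => /eqP.
by rewrite mulf_eq0 pnatr_eq0 orbF => /eqP.
Qed.

Lemma coefM1 (p q : {poly rat}) : (p * q)`_1 = p`_0 * q`_1 + p`_1 * q`_0.
Proof. by rewrite coefM big_ord_recr big_ord_recr big_ord0 /= add0r. Qed.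

Lemma numer1 : numer_poly`_1 = 1.
Proof. by rewrite /numer_poly coefB coefD coef1 coefX coefXn /= subr0 add0r. Qed.

Lemma S01 L r : r 0%N = 1 -> ps_mul r r = ps_of_poly Delta -> (3 <= L)%N ->
  eqN 2 (tr L (s2_of r)) 1.
Proof.
move=> hr0 hr2 hL.
have hQ := Qd_eq (L:=L) hr0 hr2.
set S := tr L (s2_of r) in hQ *.
have h0 := hQ 0%N ltac:(lia); have h1 := hQ 1%N ltac:(lia).
move: h0 h1; rewrite /Qd !coefD !coefN coef0 !coef1 coefM1 !coef0M.
rewrite coefM1 !coefX numer0 numer1 /= => h0 h1.
have e0 : S`_0 = 1.
  by move: h0; rewrite mul1r mul0r addr0 => /eqP; rewrite subr_eq0 => /eqP <-.
rewrite e0 in h1.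
have e1 : S`_1 = - (0 - (1 * S`_1 + 1 * 1) + (0 * (S ^+ 2)`_1 + 1 * (1 * 1))) by ring.
rewrite h1 coef0 oppr0 in e1.
move=> [|[|i]] hi //.
  by rewrite e0 coef1.
by rewrite e1 coef1.
Qed.

Definition aa r k n := ps_mul (ps_zpow k) (ps_exp (s2_of r) k) n.
Definition bb r k n := ps_mul (ps_zpow k) (ps_sub (ps_exp (s2_of r) k.+1) (ps_exp (s2_of r) k)) n.

Lemma aaE r L k n : (n < L)%N -> aa r k n = (('X^k) * tr L (s2_of r) ^+ k)`_n.
Proof.
move=> hn; rewrite /aa -(trE _ hn).
eapply eqN_trans; [exact: tr_mul | | exact: hn].
by apply: eqN_mul; [apply: tr_zpow | apply: tr_exp].
Qed.

Lemma bbE r L k n : (n < L)%N ->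
  bb r k n = (('X^k) * (tr L (s2_of r) ^+ k.+1 - tr L (s2_of r) ^+ k))`_n.
Proof.
move=> hn; rewrite /bb -(trE _ hn).
eapply eqN_trans; [exact: tr_mul | | exact: hn].
apply: eqN_mul; first exact: tr_zpow.
eapply eqN_trans; first exact: tr_sub.
by apply: eqN_sub; apply: tr_exp.
Qed.

Section Main.
Variables (r : ps) (hr0 : r 0%N = 1) (hr2 : ps_mul r r = ps_of_poly Delta).

Lemma aa0 n : aa r 0 n = (n == 0)%:R.
Proof. by rewrite (aaE _ _ (ltnSn n)) !expr0 mulr1 coef1. Qed.

Lemma aaS0 k : aa r k.+1 0 = 0.
Proof. by rewrite (aaE _ _ (ltnSn 0)) coefXnM. Qed.

Lemma bb_small k n : (n <= k.+1)%N -> bb r k n = 0.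
Proof.
move=> hn; have hL : (n < n.+3)%N by lia.
rewrite (bbE _ _ hL) coefXnM; case: ltnP => // hkn.
have h := S01 hr0 hr2 (isT : (3 <= n.+3)%N).
have := eqN_sub (eqN_exp k.+1 h) (eqN_exp k h).
rewrite !expr1n subrr => ->; [by rewrite coef0 | lia].
Qed.

Lemma aaSS k n : aa r k.+1 n.+1 = aa r k n + bb r k n.
Proof.
have hL : (n.+1 < n.+2)%N by lia.
have hL' : (n < n.+2)%N by lia.
rewrite (aaE _ _ hL) (aaE _ _ hL') (bbE _ _ hL') -coefD.
set S := tr _ _.
have -> : ('X^(k.+1)) * S ^+ k.+1 = 'X * (('X^k) * S ^+ k + ('X^k) * (S ^+ k.+1 - S ^+ k)).
  rewrite !exprS; ring.
by rewrite coefXM.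
Qed.

Lemma bbSS k n : bb r k n.+1 = aa r k.+1 n + bb r k.+1 n.+1.
Proof.
have hL : (n.+1 < n.+3)%N by lia.
have hL' : (n < n.+3)%N by lia.
rewrite (aaE _ _ hL') !(bbE _ _ hL).
set S := tr _ _.
have hQ := Qd_eq (L := n.+3) hr0 hr2.
have -> : ('X^k) * (S ^+ k.+1 - S ^+ k) =
   'X * (('X^(k.+1)) * S ^+ k.+1) + ('X^(k.+1)) * (S ^+ k.+2 - S ^+ k.+1) - ('X^k) * S ^+ k * Qd S.
  rewrite /Qd /numer_poly !exprS; ring.
rewrite coefB coefD coefXM /=.
have -> : (('X^k) * S ^+ k * Qd S)`_n.+1 = 0.
  have := eqN_mul (@eqN_refl n.+2 (('X^k) * S ^+ k)) hQ.
  by rewrite mulr0 => ->; rewrite ?coef0.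
by rewrite subr0.
Qed.

End Main.

Lemma main_ind r : r 0%N = 1 -> ps_mul r r = ps_of_poly Delta ->
  forall n m, (n <= m)%N -> forall k,
    (Fc m k n)%:R = aa r k n /\ (Gc m k n)%:R = bb r k n.
Proof.
move=> hr0 hr2; elim=> [|n IH] m hm.
  move=> k; rewrite Fc0 Gc0 bb_small //; split => //.
  by case: k => [|k]; [rewrite aa0 | rewrite aaS0].
have hF : forall k, (Fc m k n.+1)%:R = aa r k n.+1.
  case=> [|k]; first by rewrite Fc0S aa0.
  rewrite FcSS natrD aaSS //; have [h1 h2] := IH m (ltnW hm) k; by rewrite h1 h2.
move=> k; split; first exact: hF.
suff H : forall d k, (n <= k + d)%N -> (Gc m k n.+1)%:R = bb r k n.+1.
  by apply: H; apply: leq_addl.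
elim=> [|d IHd] k' hk.
  rewrite Gcbig ?bb_small //; [lia | lia | lia].
case: (leqP n k') => hnk.
  by rewrite Gcbig ?bb_small //; lia.
rewrite GcSS // natrD bbSS //.
have [h1 _] := IH m (ltnW hm) k'.+1.
rewrite h1 IHd //; lia.
Qed.

Lemma aa_bb r k n : aa r k n + bb r k n = ps_mul (ps_zpow k) (ps_exp (s2_of r) k.+1) n.
Proof.
rewrite /aa /bb /ps_mul -big_split; apply: eq_bigr => i _; rewrite /ps_sub /=; ring.
Qed.

Lemma all_split k n : all_gf k n = f_gf k n + g_gf k n.
Proof.
rewrite /all_gf /f_gf /g_gf !count_paths_W -natrD; congr (_%:R).
apply: count_split => s _.
case ha: (air_path s) => //=.
rewrite -(air_last ha).
case: s ha => [|y s] ha /=; first by rewrite andbT !andbF addn0.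
by case: (_ == _); case: (is_down _).
Qed.

Theorem theorem1 (r : ps) (hr0 : r 0%N = 1) (hr2 : ps_mul r r = ps_of_poly Delta) :
  forall (k n : nat),
    [/\ f_gf k n = ps_mul (ps_zpow k) (ps_exp (s2_of r) k) n,
        g_gf k n = ps_mul (ps_zpow k)
                     (ps_sub (ps_exp (s2_of r) k.+1) (ps_exp (s2_of r) k)) n,
        f_gf k n + g_gf k n = ps_mul (ps_zpow k) (ps_exp (s2_of r) k.+1) n
      & all_gf k n = ps_mul (ps_zpow k) (ps_exp (s2_of r) k.+1) n].
Proof.
move=> k n.
have [hF hG] := main_ind hr0 hr2 (leqnn n) k.
have ef : f_gf k n = aa r k n by rewrite -hF /f_gf count_paths_W.
have eg : g_gf k n = bb r k n by rewrite -hG /g_gf count_paths_W.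
have e3 : f_gf k n + g_gf k n = ps_mul (ps_zpow k) (ps_exp (s2_of r) k.+1) n.
  by rewrite ef eg aa_bb.
split => //; by rewrite all_split.
Qed.
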